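(* In the standing setup below, for every $p\ge0$, sending $f\in\ker\big(I^pC^p\xrightarrow{\partial}I^pC^{p+1}/I^{p+1}C^{p+1}\big)$ to the unique $f'$ with $f=f'\circ\pi^p$ defines an isomorphism $$ss(I^\bullet C^\bullet)_1^{p,0}\cong C^p(G/N,A^N).$$
   Context: Standing setup: $\mathbf C$ is a topological category (a category with finite limits and a faithful functor $\mathfrak z:\mathbf C\to\mathbf{Set}$ with fully faithful left adjoint $\mathbf F$ commuting with finite limits, such that for every discrete $D$ and all $X,Y$ the map $\mathrm{Hom}(D\times X,Y)\to\mathrm{Hom}_{\mathbf{Set}}(\mathfrak zD,\mathrm{Hom}(X,Y))$ is bijective; $X$ is discrete if $\mathfrak z:\mathrm{Hom}(X,Y)\to\mathrm{Hom}_{\mathbf{Set}}(\mathfrak zX,\mathfrak zY)$ is bijective for all $Y$; $\bullet$ is a point). $G'$ is a group object in $\mathbf C$, $M_1,\dots,M_r$ abelian monoid objects, $G=G'\times\prod_iM_i$. $N'$ is a normal subgroup of $G'$ (a morphism of group objects whose cokernel exists in group objects and has kernel exactly $N'$), $N=N'\times\prod_iM_i^{e'_i}$ with $e'_i\in\{0,1\}$, $\pi:G\to G/N$ its cokernel (with kernel $N$), and there is a section $s:G/N\to G$ in $\mathbf C$ with $\pi\circ s=\mathrm{id}$ whose image contains the neutral element. $(A,h_A)$ is a $G$-module with $\mathbf C$-rigidification: an abelian group $A$ with $\mathfrak zG$-module structure and a functor $h_A:\mathbf C^{\mathrm{op}}\to\mathbf{Set}$ with $h_A(X)$ a subgroup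 of $\mathrm{Hom}_{\mathbf{Set}}(\mathfrak zX,A)$ functorially, $h_A(\mathbf F\bullet)=A$, such that $(g,x)\mapsto g\cdot f(x)$ lies in $h_A(G\times X)$ for $f\in h_A(X)$. $C^n=C^n(G,A)$: $f\in h_A(G^n)$ vanishing whenever an argument is $1$, with differential $\partial f(x_1,\dots,x_{n+1})=x_1f(x_2,\dots,x_{n+1})+\sum_{i=1}^n(-1)^if(\dots,x_ix_{i+1},\dots)+(-1)^{n+1}f(x_1,\dots,x_n)$. $I^jC^n$: the $f\in C^n$ of the form $f'\circ(\mathrm{id}_{G^{n-j}}\times\pi^j)$ with $f'\in h_A(G^{n-j}\times(G/N)^j)$; $I^jC^n=0$ for $j>n$; these are subcomplexes. $ss(I^\bullet C^\bullet)_1^{p,q}=\ker\big(I^pC^{p+q}\xrightarrow{\partial}C^{p+q+1}/I^{p+1}C^{p+q+1}\big)/\big(\partial(I^pC^{p+q-1})+I^{p+1}C^{p+q}\big)$ is the $E_1$-term of the spectral sequence of the filtered complex. $A^N=(A^{\mathfrak zN},h_{A^N})$ with $h_{A^N}(X)=\{f\in h_A(X):f(\mathfrak zX)\subseteq A^{\mathfrak zN}\}$. $C^p(G/N,A^N)$ is the set of $f'\in h_{A^N}((G/N)^p)$ vanishing whenever some argument is the neutral element. *)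

(* Defs.v *)
From HB Require Import structures.
From mathcomp Require Import all_boot all_algebra.
Set Implicit Arguments. Unset Strict Implicit. Unset Printing Implicit Defensive.
Import GRing.Theory.
Local Open Scope ring_scope.

(* Topological categories, presented concretely.                            *)
(* An object is a carrier type T (= z X) together with a structure s : st T; *)
(* a morphism X -> Y is a function between carriers that is admissible.     *)
(* Since z is faithful and (being a right adjoint) preserves finite limits,  *)
(* up to equivalence one may take: terminal object = unit, binary product =  *)
(* cartesian product, equalizer = set-theoretic equalizer (subtype).  The    *)
(* fully faithful left adjoint F has unit an iso, so F S = (S, st_disc S)    *)
(* with every function out of it admissible.                                 *)
Record topcat := TopCat {
  st : Type -> Type;
  adm : forall X Y : Type, st X -> st Y -> (X -> Y) -> Prop;
  adm_id : forall X (sX : st X), adm sX sX (fun x => x);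
  adm_comp : forall X Y Z (sX : st X) (sY : st Y) (sZ : st Z) (f : X -> Y) (g : Y -> Z),
     adm sX sY f -> adm sY sZ g -> adm sX sZ (fun x => g (f x));
  st_one : st unit;
  adm_one : forall X (sX : st X), adm sX st_one (fun _ => tt);
  st_prod : forall X Y, st X -> st Y -> st (X * Y);
  adm_fst : forall X Y (sX : st X) (sY : st Y), adm (st_prod sX sY) sX fst;
  adm_snd : forall X Y (sX : st X) (sY : st Y), adm (st_prod sX sY) sY snd;
  adm_pair : forall X Y Z (sX : st X) (sY : st Y) (sZ : st Z) (f : Z -> X) (g : Z -> Y),
     adm sZ sX f -> adm sZ sY g -> adm sZ (st_prod sX sY) (fun z => (f z, g z));
  st_eq : forall X Y (sX : st X) (sY : st Y) (f g : X -> Y),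
     adm sX sY f -> adm sX sY g -> st {x : X | f x = g x};
  adm_sval : forall X Y (sX : st X) (sY : st Y) (f g : X -> Y)
     (af : adm sX sY f) (ag : adm sX sY g),
     adm (st_eq af ag) sX (fun x => proj1_sig x);
  adm_lift : forall X Y Z (sX : st X) (sY : st Y) (sZ : st Z) (f g : X -> Y)
     (af : adm sX sY f) (ag : adm sX sY g) (h : Z -> X) (ah : adm sZ sX h)
     (E : forall z, f (h z) = g (h z)),
     adm sZ (st_eq af ag) (fun z => exist (fun x => f x = g x) (h z) (E z));
  (* the fully faithful left adjoint F of z *)
  st_disc : forall X, st X;
  adm_disc : forall X Y (sY : st Y) (f : X -> Y), adm (st_disc X) sY f;
  (* F commutes with finite limits *)
  disc_one : forall Y (sY : st Y) (f : unit -> Y), adm st_one sY f;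
  disc_prod : forall X1 X2 Y (sY : st Y) (f : X1 * X2 -> Y),
     adm (st_prod (st_disc X1) (st_disc X2)) sY f;
  disc_eq : forall X1 X2 (f g : X1 -> X2) Y (sY : st Y) (h : {x | f x = g x} -> Y),
     adm (st_eq (adm_disc (st_disc X2) f) (adm_disc (st_disc X2) g)) sY h;
  (* for every discrete D: Hom(D x X, Y) -> Hom_Set(zD, Hom(X, Y)) is onto
     (it is injective automatically, morphisms being functions) *)
  adm_exp : forall D X Y (sD : st D) (sX : st X) (sY : st Y) (h : D * X -> Y),
     (forall Z (sZ : st Z) (k : D -> Z), adm sD sZ k) ->
     (forall d, adm sX sY (fun x => h (d, x))) -> adm (st_prod sD sX) sY h
}.

Arguments st_one {t}.
Arguments st_prod {t X Y}.
Arguments st_disc {t}.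
Arguments adm {t X Y}.

Definition discrete (C : topcat) (X : Type) (sX : st C X) :=
  forall Y (sY : st C Y) (f : X -> Y), adm sX sY f.

(* (By faithfulness of z, the diagrams commute iff they do on carriers; the  *)
(* neutral element is a morphism F(pt) -> M, i.e. any element.)              *)
Record monobj (C : topcat) := MonObj {
  mcar : Type;
  mst : st C mcar;
  mmul : mcar -> mcar -> mcar;
  mone : mcar;
  mmul_adm : adm (st_prod mst mst) mst (fun xy => mmul xy.1 xy.2);
  mmulA : associative mmul;
  mmul1l : left_id mone mmul;
  mmul1r : right_id mone mmul
}.

Record grpobj (C : topcat) := GrpObj {
  gbase :> monobj C;
  ginv : mcar gbase -> mcar gbase;
  ginv_adm : adm (mst gbase) (mst gbase) ginv;
  gmulVx : forall x, mmul (ginv x) x = mone gbase;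
  gmulxV : forall x, mmul x (ginv x) = mone gbase
}.

Record amonobj (C : topcat) := AMonObj {
  abase :> monobj C;
  amulC : commutative (@mmul C abase)
}.

Definition mmorph (C : topcat) (M1 M2 : monobj C) (f : mcar M1 -> mcar M2) :=
  [/\ adm (mst M1) (mst M2) f,
      forall x y, f (mmul x y) = mmul (f x) (f y) &
      f (mone M1) = mone M2].

Definition mtriv (C : topcat) : monobj C.
Proof.
refine (@MonObj C unit st_one (fun _ _ => tt) tt _ _ _ _).
- exact: adm_one.
- by move=> ? ? ?.
- by case.
- by case.
Defined.

Definition mprod (C : topcat) (M1 M2 : monobj C) : monobj C.
Proof.
refine (@MonObj C (mcar M1 * mcar M2) (st_prod (mst M1) (mst M2))
  (fun x y => (mmul x.1 y.1, mmul x.2 y.2)) (mone M1, mone M2) _ _ _ _).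
- apply: adm_pair.
  + apply: (adm_comp (g := fun xy => mmul xy.1 xy.2)
        (f := fun xy : (mcar M1 * mcar M2) * (mcar M1 * mcar M2) => (xy.1.1, xy.2.1)));
      last exact: mmul_adm.
    apply: adm_pair.
    * exact: (adm_comp (adm_fst _ _) (adm_fst _ _)).
    * exact: (adm_comp (adm_snd _ _) (adm_fst _ _)).
  + apply: (adm_comp (g := fun xy => mmul xy.1 xy.2)
        (f := fun xy : (mcar M1 * mcar M2) * (mcar M1 * mcar M2) => (xy.1.2, xy.2.2)));
      last exact: mmul_adm.
    apply: adm_pair.
    * exact: (adm_comp (adm_fst _ _) (adm_snd _ _)).
    * exact: (adm_comp (adm_snd _ _) (adm_snd _ _)).
- by move=> x y z; rewrite /= !mmulA.
- by case=> x y; rewrite /= !mmul1l.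
- by case=> x y; rewrite /= !mmul1r.
Defined.

Definition mbig (C : topcat) (Ms : seq (monobj C)) : monobj C :=
  foldr (@mprod C) (mtriv C) Ms.

Definition Gobj (C : topcat) (G' : grpobj C) (Ms : seq (amonobj C)) : monobj C :=
  mprod G' (mbig [seq abase M | M <- Ms]).

(* the factors M_i^{e'_i}  (M_i^1 = M_i, M_i^0 = trivial) *)
Definition selM (C : topcat) (Ms : seq (amonobj C)) (es : seq bool) : seq (monobj C) :=
  [seq (if e.2 then abase e.1 else mtriv C) | e <- zip Ms es].

Definition pickin (C : topcat) (e : bool) (M : amonobj C) :
  mcar (if e then abase M else mtriv C) -> mcar (abase M) :=
  match e as b return mcar (if b then abase M else mtriv C) -> mcar (abase M) with
  | true => fun x => x
  | false => fun _ => mone (abase M)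
  end.

Fixpoint inclM (C : topcat) (Ms : seq (amonobj C)) (es : seq bool) {struct Ms} :
  mcar (mbig (selM Ms es)) -> mcar (mbig [seq abase M | M <- Ms]) :=
  match Ms as Ms0
    return mcar (mbig (selM Ms0 es)) -> mcar (mbig [seq abase M | M <- Ms0]) with
  | [::] => fun _ => tt
  | M :: Ms' =>
    match es as es0
      return mcar (mbig (selM (M :: Ms') es0)) -> mcar (mbig [seq abase M | M <- M :: Ms'])
    with
    | [::] => fun _ => mone (mbig [seq abase M | M <- M :: Ms'])
    | e :: es' => fun x => (@pickin C e M x.1, @inclM C Ms' es' x.2)
    end
  end.

Definition Nobj (C : topcat) (N' : grpobj C) (Ms : seq (amonobj C)) (es : seq bool) :
  monobj C := mprod N' (mbig (selM Ms es)).

Definition Nincl (C : topcat) (N' G' : grpobj C) (iota' : mcar N' -> mcar G')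
  (Ms : seq (amonobj C)) (es : seq bool) :
  mcar (Nobj N' Ms es) -> mcar (Gobj G' Ms) :=
  fun x => (iota' x.1, @inclM C Ms es x.2).

Definition is_mcokernel (C : topcat) (N G Q : monobj C)
  (f : mcar N -> mcar G) (q : mcar G -> mcar Q) :=
  [/\ mmorph q, (forall n, q (f n) = mone Q) &
   forall (H : monobj C) (phi : mcar G -> mcar H), mmorph phi ->
     (forall n, phi (f n) = mone H) ->
     exists psi, [/\ mmorph psi, (forall g, psi (q g) = phi g) &
       forall psi', mmorph psi' -> (forall g, psi' (q g) = phi g) ->
         forall y, psi' y = psi y]].

Definition is_gcokernel (C : topcat) (N G Q : grpobj C)
  (f : mcar N -> mcar G) (q : mcar G -> mcar Q) :=
  [/\ mmorph q, (forall n, q (f n) = mone Q) &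
   forall (H : grpobj C) (phi : mcar G -> mcar H), mmorph phi ->
     (forall n, phi (f n) = mone H) ->
     exists psi, [/\ mmorph psi, (forall g, psi (q g) = phi g) &
       forall psi', mmorph psi' -> (forall g, psi' (q g) = phi g) ->
         forall y, psi' y = psi y]].

(* f : N -> G is the kernel of q : G -> Q (pullback of q along the neutral
   element pt -> Q) *)
Definition is_kernel (C : topcat) (N G Q : monobj C)
  (f : mcar N -> mcar G) (q : mcar G -> mcar Q) :=
  (forall n, q (f n) = mone Q) /\
  forall (Z : Type) (sZ : st C Z) (h : Z -> mcar G), adm sZ (mst G) h ->
    (forall z, q (h z) = mone Q) ->
    exists k, [/\ adm sZ (mst N) k, (forall z, f (k z) = h z) &
      forall k', (forall z, f (k' z) = h z) -> forall z, k' z = k z].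

Definition normal_subgroup (C : topcat) (N' G' : grpobj C) (iota' : mcar N' -> mcar G') :=
  mmorph (M1 := N') (M2 := G') iota' /\
  exists (Q' : grpobj C) (q : mcar G' -> mcar Q'),
    is_gcokernel iota' q /\ is_kernel (N := N') (G := G') (Q := Q') iota' q.

Definition is_module (C : topcat) (G : monobj C) (A : zmodType)
  (act : mcar G -> A -> A) :=
  [/\ forall a, act (mone G) a = a,
      forall g h a, act (mmul g h) a = act g (act h a) &
      forall g a b, act g (a + b) = act g a + act g b].

Definition is_rigidification (C : topcat) (G : monobj C) (A : zmodType)
  (act : mcar G -> A -> A) (hA : forall X : Type, st C X -> (X -> A) -> Prop) :=
  [/\
      forall X (sX : st C X), hA X sX (fun _ => 0),
      forall X (sX : st C X) f g, hA X sX f -> hA X sX g -> hA X sX (fun x => f x - g x),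
      (* functoriality: h_A(u) is precomposition with u *)
      forall X Y (sX : st C X) (sY : st C Y) (u : X -> Y), adm sX sY u ->
        forall f, hA Y sY f -> hA X sX (fun x => f (u x)),
      (* h_A(F pt) = A *)
      forall f : unit -> A, hA unit (st_disc unit) f &
      forall X (sX : st C X) f, hA X sX f ->
        hA (mcar G * X)%type (st_prod (mst G) sX) (fun gx => act gx.1 (f gx.2))].

(* Cochains.  X^n has carrier tup X n = X * (X * ... * unit).  A cochain in  *)
(* C^n is represented by a function on sequences, supported on sequences of  *)
(* length n: f(x_1,...,x_n) is f [:: x_1; ...; x_n].                          *)
Fixpoint tup (X : Type) (n : nat) : Type :=
  match n with 0 => unit | n'.+1 => (X * tup X n')%type end.

Fixpoint pow (C : topcat) (X : Type) (sX : st C X) (n : nat) : st C (tup X n) :=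
  match n with 0 => st_one | n'.+1 => st_prod sX (pow sX n') end.

Fixpoint tup2seq (X : Type) (n : nat) : tup X n -> seq X :=
  match n as n0 return tup X n0 -> seq X with
  | 0 => fun _ => [::]
  | n'.+1 => fun t => t.1 :: @tup2seq X n' t.2
  end.

Fixpoint tmap (X Y : Type) (f : X -> Y) (n : nat) : tup X n -> tup Y n :=
  match n as n0 return tup X n0 -> tup Y n0 with
  | 0 => fun t => t
  | n'.+1 => fun t => (f t.1, @tmap X Y f n' t.2)
  end.

(* merge the entries k and k+1 (0-based): (.., x_k x_{k+1}, ..) *)
Fixpoint mergeat (X : Type) (mul : X -> X -> X) (k : nat) (s : seq X) : seq X :=
  match s, k with
  | x :: (y :: t) as t', 0 => mul x y :: t
  | x :: t, k'.+1 => x :: mergeat mul k' t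
  | _, _ => s
  end.

Definition sgn (A : zmodType) (i : nat) (a : A) : A := if odd i then - a else a.

Section Cochains.
Variables (C : topcat) (G Q : monobj C) (pi : mcar G -> mcar Q).
Variables (A : zmodType) (act : mcar G -> A -> A).
Variable (hA : forall X : Type, st C X -> (X -> A) -> Prop).

Definition cochain (n : nat) (f : seq (mcar G) -> A) :=
  [/\ forall s, size s != n -> f s = 0,
      hA (pow (mst G) n) (fun t => f (tup2seq t)) &
      forall s1 s2, (size s1 + size s2)%N.+1 = n -> f (s1 ++ mone G :: s2) = 0].

Definition dcoch (f : seq (mcar G) -> A) (s : seq (mcar G)) : A :=
  match s with
  | [::] => 0
  | x :: t => act x (f t)
      + \sum_(1 <= i < size s) sgn i (f (mergeat (@mmul C G) i.-1 s))
      + sgn (size s) (f (belast x t))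
  end.

Definition Ifilt (j n : nat) (f : seq (mcar G) -> A) :=
  [/\ cochain n f,
      (n < j)%N -> forall s, f s = 0 &
      (j <= n)%N -> exists f' : (tup (mcar G) (n - j)%N * tup (mcar Q) j)%type -> A,
        hA (st_prod (pow (mst G) (n - j)%N) (pow (mst Q) j)) f' /\
        forall (t1 : tup (mcar G) (n - j)%N) (t2 : tup (mcar G) j),
          f (tup2seq t1 ++ tup2seq t2) = f' (t1, tmap pi t2)].

Definition ss1_num (p q : nat) (f : seq (mcar G) -> A) :=
  Ifilt p (p + q)%N f /\ Ifilt p.+1 (p + q).+1%N (dcoch f).

(* denominator: d(I^p C^{p+q-1}) + I^{p+1} C^{p+q}  (C^{-1} = 0) *)
Definition ss1_den (p q : nat) (f : seq (mcar G) -> A) :=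
  exists g h,
    [/\ (match (p + q)%N with 0 => forall s, g s = 0 | m.+1 => Ifilt p m g end),
        Ifilt p.+1 (p + q)%N h &
        forall s, f s = dcoch g s + h s].
End Cochains.

Definition Ninvariant (C : topcat) (N G : monobj C) (incl : mcar N -> mcar G)
  (A : zmodType) (act : mcar G -> A -> A) (a : A) :=
  forall n, act (incl n) a = a.

Definition cochainQ (C : topcat) (Q : monobj C) (A : zmodType)
  (hA : forall X : Type, st C X -> (X -> A) -> Prop) (inv : A -> Prop)
  (p : nat) (g : seq (mcar Q) -> A) :=
  [/\ forall s, size s != p -> g s = 0,
      hA _ (pow (mst Q) p) (fun t => g (tup2seq t)),
      forall t : tup (mcar Q) p, inv (g (tup2seq t)) &
      forall s1 s2, (size s1 + size s2)%N.+1 = p -> g (s1 ++ mone Q :: s2) = 0].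

(* Main.v *)
Require Import Defs.
From mathcomp Require Import all_boot all_algebra.
From Stdlib Require Import FunctionalExtensionality.
Import GRing.Theory.

Set Implicit Arguments. Unset Strict Implicit. Unset Printing Implicit Defensive.
Local Open Scope ring_scope.

Section Tup.
Variable X : Type.
Lemma size_tup2seq n (t : tup X n) : size (tup2seq t) = n.
Proof. by elim: n t => [|n IH] [] //= a r; rewrite IH. Qed.
Lemma tup2seq_inj n (t1 t2 : tup X n) : tup2seq t1 = tup2seq t2 -> t1 = t2.
Proof.
elim: n t1 t2 => [|n IH] [] //=; first by case.
move=> a r [b r'] [-> /IH ->] //.
Qed.
Lemma tup2seq_surj n (x : seq X) : size x = n -> exists t : tup X n, tup2seq t = x.
Proof.
elim: n x => [|n IH] [|a x] //= H; try by exists tt.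
by case: H => /IH [t <-]; exists (a, t).
Qed.
Lemma tup2seq_tmap (Y : Type) (f : X -> Y) n (t : tup X n) :
  tup2seq (tmap f t) = map f (tup2seq t).
Proof. by elim: n t => [|n IH] [] //= a r; rewrite IH. Qed.
End Tup.

Section Adm.
Variable C : topcat.
Lemma adm_const X Y (sX : st C X) (sY : st C Y) (c : Y) : adm sX sY (fun _ => c).
Proof. exact: (adm_comp (adm_one sX) (disc_one sY (fun _ => c))). Qed.
Lemma adm_tmap X Y (sX : st C X) (sY : st C Y) (f : X -> Y) n :
  adm sX sY f -> adm (pow sX n) (pow sY n) (@tmap X Y f n).
Proof.
move=> af; elim: n => [|n IH] /=; first exact: adm_id.
apply: adm_pair; first exact: (adm_comp (adm_fst _ _) af).
exact: (adm_comp (adm_snd _ _) IH).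
Qed.
End Adm.

Set Implicit Arguments. Unset Strict Implicit. Unset Printing Implicit Defensive.
Local Open Scope ring_scope.

Section HA.
Variables (C : topcat) (A : zmodType) (hA : forall X : Type, st C X -> (X -> A) -> Prop).
Hypothesis h0 : forall X (sX : st C X), hA sX (fun _ => 0).
Hypothesis hB : forall X (sX : st C X) f g, hA sX f -> hA sX g -> hA sX (fun x => f x - g x).

Lemma hA_ext X (sX : st C X) f g : f =1 g -> hA sX f -> hA sX g.
Proof. by move=> /functional_extensionality ->. Qed.
Lemma hA_opp X (sX : st C X) f : hA sX f -> hA sX (fun x => - f x).
Proof. move=> hf; apply: hA_ext (hB (h0 sX) hf) => x; by rewrite sub0r. Qed.
Lemma hA_add X (sX : st C X) f g : hA sX f -> hA sX g -> hA sX (fun x => f x + g x).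
Proof. move=> hf hg; apply: hA_ext (hB hf (hA_opp hg)) => x; by rewrite opprK. Qed.
Lemma hA_sgn X (sX : st C X) i f : hA sX f -> hA sX (fun x => sgn i (f x)).
Proof. rewrite /sgn; case: (odd i) => // hf; exact: hA_opp. Qed.
Lemma hA_sum X (sX : st C X) (r : seq nat) (F : nat -> X -> A) :
  (forall i, hA sX (F i)) -> hA sX (fun x => \sum_(i <- r) F i x).
Proof.
move=> hF; elim: r => [|i r IH].
  by apply: hA_ext (h0 sX) => x; rewrite big_nil.
by apply: hA_ext (hA_add (hF i) IH) => x; rewrite big_cons.
Qed.
End HA.

Section Merge.
Variables (X : Type) (mul : X -> X -> X).
Fixpoint mergetup (n : nat) : nat -> tup X n.+1 -> tup X n :=
  match n return nat -> tup X n.+1 -> tup X n with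
  | 0 => fun _ _ => tt
  | n'.+1 => fun k t => match k with
     | 0 => (mul t.1 t.2.1, t.2.2)
     | k'.+1 => (t.1, @mergetup n' k' t.2) end
  end.
Fixpoint droptup (n : nat) : tup X n.+1 -> tup X n :=
  match n return tup X n.+1 -> tup X n with
  | 0 => fun _ => tt
  | n'.+1 => fun t => (t.1, @droptup n' t.2)
  end.
Lemma mergetupE n k (t : tup X n.+1) : (k < n)%N ->
  tup2seq (mergetup k t) = mergeat mul k (tup2seq t).
Proof.
elim: n k t => [|n IH] [|k] // [a [b r]] //= Hk.
by rewrite IH.
Qed.
Lemma droptupE n (t : tup X n.+1) : tup2seq (droptup t) = belast t.1 (tup2seq t.2).
Proof. elim: n t => [|n IH] [a t] //=.
case: t => b r /=. rewrite -(IH (b, r)). done. Qed.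
End Merge.

Section AdmM.
Variables (C : topcat) (G : monobj C).
Lemma adm_mergetup n k : adm (pow (mst G) n.+1) (pow (mst G) n) (@mergetup _ (@mmul C G) n k).
Proof.
elim: n k => [|n IH] [|k] /=; try exact: adm_one.
- apply: adm_pair.
  + exact: (adm_comp (g := fun xy : mcar G * mcar G => mmul xy.1 xy.2)
      (f := fun t : mcar G * (mcar G * tup (mcar G) n) => (t.1, t.2.1))
      (adm_pair (adm_fst _ _) (adm_comp (adm_snd _ _) (adm_fst _ _))) (mmul_adm G)).
  + exact: (adm_comp (adm_snd _ _) (adm_snd _ _)).
- apply: adm_pair; first exact: adm_fst.
  exact: (adm_comp (adm_snd _ _) (IH k)).
Qed.
Lemma adm_droptup n : adm (pow (mst G) n.+1) (pow (mst G) n) (@droptup (mcar G) n).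
Proof.
elim: n => [|n IH] /=; first exact: adm_one.
apply: adm_pair; first exact: adm_fst.
exact: (adm_comp (adm_snd _ _) IH).
Qed.
End AdmM.

Set Implicit Arguments. Unset Strict Implicit. Unset Printing Implicit Defensive.
Local Open Scope ring_scope.

Section MergeL.
Variables (X : Type) (mul : X -> X -> X).
Lemma mergeatS k (x : X) t : mergeat mul k.+1 (x :: t) = x :: mergeat mul k t.
Proof. by case: t. Qed.
Lemma mergeat_catR k (s1 s2 : seq X) : (size s1 <= k)%N ->
  mergeat mul k (s1 ++ s2) = s1 ++ mergeat mul (k - size s1) s2.
Proof.
elim: s1 k => [|x s1 IH] [|k] // H.
by rewrite cat_cons mergeatS IH.
Qed.
Lemma mergeat_catL k (s1 s2 : seq X) : (k.+1 < size s1)%N ->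
  mergeat mul k (s1 ++ s2) = mergeat mul k s1 ++ s2.
Proof.
elim: s1 k => [|x s1 IH] [|k] //.
- by case: s1 IH => [|y s1] //.
- by move=> H; rewrite cat_cons !mergeatS IH.
Qed.
Lemma size_mergeat k (s : seq X) : (k.+1 < size s)%N -> size (mergeat mul k s) = (size s).-1.
Proof.
elim: s k => [|x s IH] [|k] //.
- by case: s IH => [|y s] //.
- by move=> H; rewrite mergeatS /= IH //; case: s H IH => [|y s].
Qed.
Lemma belast_cat1 (x : X) s y t : belast x (s ++ y :: t) = x :: s ++ belast y t.
Proof. by elim: s x => [|z s IH] x //=; rewrite IH. Qed.
End MergeL.
Lemma map_mergeat (X Y : Type) (mul : X -> X -> X) (mulY : Y -> Y -> Y) (g : X -> Y) k s :
  (forall a b, g (mul a b) = mulY (g a) (g b)) ->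
  map g (mergeat mul k s) = mergeat mulY k (map g s).
Proof.
move=> Hg; elim: s k => [|x s IH] [|k] //.
- by case: s IH => [|y s] //= _; rewrite Hg.
- by rewrite mergeatS map_cons mergeatS IH.
Qed.

Lemma sum_delta (A : zmodType) (a b j : nat) (c : A) :
  \sum_(a <= i < b) (if i == j then c else 0) = if (a <= j < b)%N then c else 0.
Proof.
rewrite -big_mkcond big_const_seq.
have -> : count (fun i => i == j) (index_iota a b) = (a <= j < b)%N.
  have := count_uniq_mem j (iota_uniq a (b - a)).
  rewrite -/(index_iota a b) mem_index_iota => <-.
  by apply: eq_count => i.
by case: (a <= j < b)%N => /=; rewrite ?addr0.
Qed.

Set Implicit Arguments. Unset Strict Implicit. Unset Printing Implicit Defensive.
Local Open Scope ring_scope.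

Section Dcoch.
Variables (C : topcat) (G : monobj C) (A : zmodType) (act : mcar G -> A -> A).
Hypothesis HA : is_module act.

Lemma act0 g : act g 0 = 0.
Proof.
case: HA => _ _ Hadd.
have H := Hadd g 0 0; rewrite addr0 in H.
by apply: (addrI (act g 0)); rewrite addr0 -H.
Qed.
Lemma act1 a : act (mone G) a = a.
Proof. by case: HA. Qed.

Lemma sgn0 i : sgn i (0 : A) = 0.
Proof. by rewrite /sgn; case: odd; rewrite ?oppr0. Qed.

Variable (n : nat) (f : seq (mcar G) -> A).
Hypothesis fsupp : forall s, size s != n -> f s = 0.

Lemma dcoch_supp s : size s != n.+1 -> dcoch act f s = 0.
Proof.
case: s => [|x t] //= Hs.
have Ht : size t != n by [].
rewrite (fsupp Ht) act0 add0r (fsupp (s := belast x t)) ?size_belast // sgn0 addr0.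
rewrite big_nat_cond big1 // => i /andP [/andP [Hi1 Hi2] _].
rewrite fsupp ?sgn0 //.
rewrite size_mergeat /=; last by rewrite prednK.
exact: Ht.
Qed.

Hypothesis fnorm0 : forall s1 s2, (size s1 + size s2).+1 = n -> f (s1 ++ mone G :: s2) = 0.
Lemma fnorm s1 s2 : f (s1 ++ mone G :: s2) = 0.
Proof.
case: (eqVneq (size s1 + size s2).+1 n) => [/fnorm0 //|H].
by apply: fsupp; rewrite size_cat /= addnS.
Qed.

Lemma dcoch_term s1 s2 i : (0 < i < size (s1 ++ mone G :: s2))%N ->
  sgn i (f (mergeat (@mmul C G) i.-1 (s1 ++ mone G :: s2))) =
  (if i == size s1 then sgn (size s1) (f (s1 ++ s2)) else 0) +
  (if i == (size s1).+1 then sgn (size s1).+1 (f (s1 ++ s2)) else 0).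
Proof.
case/andP=> Hi1 HiN.
case: (ltngtP i (size s1)) => Hij.
- rewrite mergeat_catL ?prednK // fnorm sgn0.
  rewrite add0r ifF //.
  by apply/negbTE; rewrite neq_ltn ltnS ltnW.
- rewrite add0r; case: (eqVneq i (size s1).+1) => Hi.
  + subst i; rewrite /= mergeat_catR // subnn.
    move: HiN; rewrite size_cat /=.
    case: s2 => [|y s2]; first by rewrite addn1 ltnn.
    by move=> _ /=; rewrite (_ : mmul (mone G) y = y) ?mmul1l //.
  + have Hk : (size s1 < i.-1)%N.
      by rewrite -ltnS prednK // ltn_neqAle eq_sym Hi Hij.
    rewrite mergeat_catR; last exact: ltnW.
    have -> : (i.-1 - size s1 = (i.-1 - (size s1).+1).+1)%N by rewrite subnSK.
    by rewrite mergeatS fnorm sgn0.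
- subst i; rewrite ifF ?addr0; last by rewrite eqn_leq ltnn andbF.
  move: Hi1; case: (lastP s1) => [|s1' x] //= _.
  rewrite size_rcons /= !cat_rcons mergeat_catR // subnn /=.
  by rewrite mmul1r.
Qed.

Lemma dcoch_normal s1 s2 : dcoch act f (s1 ++ mone G :: s2) = 0.
Proof.
have HjN : (size s1 < size (s1 ++ mone G :: s2))%N.
  by rewrite size_cat /= addnS ltnS leq_addr.
have Hsum := eq_big_nat 0 +%R (@dcoch_term s1 s2).
rewrite big_split /= !sum_delta HjN andbT /= in Hsum.
case E: (s1 ++ mone G :: s2) Hsum HjN => [|x t]; first by case: s1 E.
move=> Hsum HjN.
have -> : dcoch act f (x :: t) = act x (f t) + (\sum_(1 <= i < size (x :: t))
   sgn i (f (mergeat (@mmul C G) i.-1 (x :: t)))) + sgn (size (x :: t)) (f (belast x t)) by [].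
rewrite Hsum.
case: s1 E {Hsum HjN} => [|x1 s1'] /= [<- <-].
- rewrite act1; case: s2 => [|y s2] /=.
  + by rewrite /sgn /= !addr0 subrr.
  + by rewrite -[mone G :: _]cat0s fnorm sgn0 !addr0 add0r /sgn /= subrr.
- rewrite -[x1 :: _]cat0s fnorm act0 add0r belast_cat1.
  case: s2 => [|y s2] /=.
  + rewrite cats0 size_cat /= addn1 ltnn addr0.
    by rewrite /sgn /=; case: (odd (size s1')) => /=; rewrite ?subrr ?addNr.
  + have := fnorm (x1 :: s1') (belast y s2); rewrite cat_cons => ->.
    rewrite sgn0 addr0 size_cat /= !ltnS !addnS !ltnS leq_addr.
    by rewrite /sgn /=; case: (odd (size s1')) => /=; rewrite ?subrr ?addNr.
Qed.
End Dcoch.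

Set Implicit Arguments. Unset Strict Implicit. Unset Printing Implicit Defensive.
Local Open Scope ring_scope.

Section DcochHA.
Variables (C : topcat) (G : monobj C) (A : zmodType) (act : mcar G -> A -> A).
Variable (hA : forall X : Type, st C X -> (X -> A) -> Prop).
Hypothesis HhA : is_rigidification act hA.

Lemma dcoch_hA n f : hA (pow (mst G) n) (fun t => f (tup2seq t)) ->
  hA (pow (mst G) n.+1) (fun t => dcoch act f (tup2seq t)).
Proof.
case: HhA => h0 hB hF _ hact Hf.
have E : forall t : tup (mcar G) n.+1, act t.1 (f (tup2seq t.2)) +
   \sum_(i <- index_iota 1 n.+1) sgn i (f (tup2seq (mergetup (@mmul C G) i.-1 t))) +
   sgn n.+1 (f (tup2seq (droptup t))) = dcoch act f (tup2seq t).
  move=> t.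
  have Et : tup2seq t = t.1 :: tup2seq t.2 by case: t.
  rewrite Et.
  have -> : dcoch act f (t.1 :: tup2seq t.2) = act t.1 (f (tup2seq t.2)) +
     (\sum_(1 <= i < size (t.1 :: tup2seq t.2)) sgn i (f (mergeat (@mmul C G) i.-1 (t.1 :: tup2seq t.2))))
     + sgn (size (t.1 :: tup2seq t.2)) (f (belast t.1 (tup2seq t.2))) by [].
  rewrite [size (_ :: _)]/= size_tup2seq droptupE; congr (_ + _ + _).
  apply: eq_big_nat => i /andP [Hi1 Hi2].
  by rewrite mergetupE ?Et // -ltnS prednK.
apply: (hA_ext (f := fun t => act t.1 (f (tup2seq t.2)) +
   \sum_(i <- index_iota 1 n.+1) sgn i (f (tup2seq (mergetup (@mmul C G) i.-1 t))) +
   sgn n.+1 (f (tup2seq (droptup t)))) E).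
apply: (hA_add h0 hB); last first.
  apply: (hA_sgn h0 hB).
  exact: (hF _ _ _ _ _ (adm_droptup G n) _ Hf).
apply: (hA_add h0 hB).
  exact: (hact _ _ _ Hf).
apply: (hA_sum h0 hB) => i.
apply: (hA_sgn h0 hB).
exact: (hF _ _ _ _ _ (adm_mergetup G n i.-1) _ Hf).
Qed.
End DcochHA.

Unset Implicit Arguments. Unset Printing Implicit Defensive.
Local Close Scope ring_scope.

Section Kill.
Variable C : topcat.
Definition pickout (e : bool) (M : amonobj C) :
  mcar (abase M) -> mcar (if e then abase M else mtriv C) :=
  match e as b return mcar (abase M) -> mcar (if b then abase M else mtriv C) with
  | true => fun x => x
  | false => fun _ => tt
  end.

Fixpoint killM (Ms : seq (amonobj C)) (es : seq bool) {struct Ms} :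
  mcar (mbig [seq abase M | M <- Ms]) -> mcar (mbig [seq abase M | M <- Ms]) :=
  match Ms as Ms0 return
    mcar (mbig [seq abase M | M <- Ms0]) -> mcar (mbig [seq abase M | M <- Ms0]) with
  | [::] => fun x => x
  | M :: Ms' => match es with
    | [::] => fun x => x
    | e :: es' => fun x => ((if e then mone (abase M) else x.1), @killM Ms' es' x.2)
    end
  end.

Fixpoint selpart (Ms : seq (amonobj C)) (es : seq bool) {struct Ms} :
  mcar (mbig [seq abase M | M <- Ms]) -> mcar (mbig (selM Ms es)) :=
  match Ms as Ms0 return
    mcar (mbig [seq abase M | M <- Ms0]) -> mcar (mbig (selM Ms0 es)) with
  | [::] => match es as es0 return
      mcar (mbig [seq abase M | M <- [::]]) -> mcar (mbig (selM [::] es0)) with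
    | [::] => fun _ => tt
    | _ :: _ => fun _ => tt
    end
  | M :: Ms' => match es as es0 return
      mcar (mbig [seq abase M | M <- M :: Ms']) -> mcar (mbig (selM (M :: Ms') es0)) with
    | [::] => fun _ => tt
    | e :: es' => fun x => (@pickout e M x.1, @selpart Ms' es' x.2)
    end
  end.

Lemma kill_dec Ms es m :
  mmul (killM Ms es m) (@inclM C Ms es (selpart Ms es m)) = m.
Proof.
elim: Ms es m => [|M Ms IH] [|e es] /=; try by case.
- by case=> m1 m2 /=; rewrite !mmul1r.
- by case=> m1 m2 /=; rewrite IH; case: e => /=; rewrite ?mmul1l ?mmul1r.
Qed.

Lemma kill_incl Ms es n : killM Ms es (@inclM C Ms es n) = mone _.
Proof.
elim: Ms es n => [|M Ms IH] [|e es] //=; try by case.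
by case=> n1 n2 /=; rewrite IH; case: e n1.
Qed.

Lemma incl_one Ms es : @inclM C Ms es (mone _) = mone _.
Proof.
elim: Ms es => [|M Ms IH] [|e es] //=.
by rewrite IH; case: e.
Qed.

Lemma kill_mul Ms es x y : killM Ms es (mmul x y) = mmul (killM Ms es x) (killM Ms es y).
Proof.
elim: Ms es x y => [|M Ms IH] [|e es] //= [x1 x2] [y1 y2] /=.
by rewrite IH; case: e; rewrite ?mmul1l.
Qed.

Lemma kill_one Ms es : killM Ms es (mone _) = mone _.
Proof.
elim: Ms es => [|M Ms IH] [|e es] //=.
by rewrite IH; case: e.
Qed.

Lemma kill_adm Ms es : adm (mst (mbig [seq abase M | M <- Ms]))
  (mst (mbig [seq abase M | M <- Ms])) (killM Ms es).
Proof.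
elim: Ms es => [|M Ms IH] [|e es] /=; try exact: adm_id.
apply: adm_pair; last exact: (adm_comp (adm_snd _ _) (IH es)).
case: e; [exact: adm_const | exact: adm_fst].
Qed.
End Kill.

Unset Implicit Arguments. Unset Printing Implicit Defensive.
Local Close Scope ring_scope.

Section Inv.
Variables (C : topcat) (G' N' : grpobj C) (iota' : mcar N' -> mcar G')
  (Ms : seq (amonobj C)) (es : seq bool) (Q : monobj C)
  (pi : mcar (Gobj G' Ms) -> mcar Q) (A : zmodType) (act : mcar (Gobj G' Ms) -> A -> A).
Hypotheses (HN' : normal_subgroup iota')
  (Hcok : is_mcokernel (@Nincl C N' G' iota' Ms es) pi) (HA : is_module act).

Lemma act_inv x x' a : pi x = pi x' ->
  (forall n, act (@Nincl C N' G' iota' Ms es n) a = a) -> act x a = act x' a.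
Proof.
case: HN' => [[_ _ Hiota1] [Q' [q [[[Hqadm Hqmul Hq1] Hqiota _] [_ Hker]]]]].
case: Hcok => _ _ Huniv.
case: HA => _ HAmul _.
pose H := mprod (gbase Q') (mbig [seq abase M | M <- Ms]).
pose phi := fun x : mcar (Gobj G' Ms) => ((q x.1, killM C Ms es x.2) : mcar H).
have Hphi : mmorph (M1 := Gobj G' Ms) (M2 := H) phi.
  split.
  - exact: (adm_pair (adm_comp (adm_fst _ _) Hqadm) (adm_comp (adm_snd _ _) (kill_adm C Ms es))).
  - by case=> [x1 x2] [y1 y2]; rewrite /phi /= Hqmul kill_mul.
  - by rewrite /phi /= Hq1 kill_one.
have Hphi1 : forall n, phi (@Nincl C N' G' iota' Ms es n) = mone H.
  by case=> n1 n2; rewrite /phi /= Hqiota kill_incl.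
case: (Huniv H phi Hphi Hphi1) => psi [_ Hpsi _].
move=> Hpix Ha.
have : phi x = phi x' by rewrite -!Hpsi Hpix.
have Hdec : forall y : mcar (Gobj G' Ms), act y a = act (y.1, killM C Ms es y.2) a.
  move=> y; change (mcar (Gobj G' Ms)) with (mcar G' * mcar (mbig [seq abase M | M <- Ms]))%type in y.
  case: y => g m.
  have E : ((g, m) : mcar (Gobj G' Ms)) = mmul (m := Gobj G' Ms) (g, killM C Ms es m)
     (@Nincl C N' G' iota' Ms es (mone N', selpart C Ms es m)).
    by rewrite /Nincl /= Hiota1 mmul1r kill_dec.
  by rewrite {1}E HAmul Ha.
rewrite (Hdec x) (Hdec x').
change (mcar (Gobj G' Ms)) with (mcar G' * mcar (mbig [seq abase M | M <- Ms]))%type in x.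
change (mcar (Gobj G' Ms)) with (mcar G' * mcar (mbig [seq abase M | M <- Ms]))%type in x'.
case: x x' {Hpix Hdec} => [g m] [g' m'] /= [Hqg ->].
have Hh : forall z : unit, q ((fun _ => mmul (ginv g) g') z) = mone Q'.
  move=> _ /=; rewrite Hqmul -Hqg -Hqmul gmulVx //.
case: (Hker unit (st_disc unit) _ (adm_disc _ _) Hh) => k [_ Hk _].
have -> : g' = mmul g (iota' (k tt)) by rewrite Hk mmulA gmulxV mmul1l.
set kk := killM C Ms es m'.
have -> : ((mmul g (iota' (k tt)), kk) : mcar (Gobj G' Ms)) = mmul (m := Gobj G' Ms) (g, kk)
     (@Nincl C N' G' iota' Ms es (k tt, mone _)).
  by rewrite /Nincl /= incl_one mmul1r.
by rewrite HAmul Ha.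
Qed.
End Inv.

Set Implicit Arguments. Unset Strict Implicit. Unset Printing Implicit Defensive.
Local Open Scope ring_scope.

Section IfiltL.
Variables (C : topcat) (G Q : monobj C) (pi : mcar G -> mcar Q) (A : zmodType).
Variable (hA : forall X : Type, st C X -> (X -> A) -> Prop).
Hypothesis h0 : forall X (sX : st C X), hA sX (fun _ => 0).
Hypothesis hF : forall X Y (sX : st C X) (sY : st C Y) (u : X -> Y), adm sX sY u ->
        forall f, hA sY f -> hA sX (fun x => f (u x)).

Lemma cochain_zero n : cochain hA n (fun _ : seq (mcar G) => 0 : A).
Proof. by split. Qed.

Lemma Ifilt_zero j n : Ifilt pi hA j n (fun _ => 0).
Proof.
split; [exact: cochain_zero | by [] | move=> _].
by exists (fun _ => 0); split.
Qed.

Lemma Ifilt_nn n f : Ifilt pi hA n n f ->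
  exists F : tup (mcar Q) n -> A, hA (pow (mst Q) n) F /\
    forall t, f (tup2seq t) = F (tmap pi t).
Proof.
case=> _ _ /(_ (leqnn n)); rewrite subnn => [[f' [Hf' E]]].
exists (fun t => f' (tt, t)); split.
  exact: (hF (adm_pair (adm_one _) (adm_id _)) Hf').
by move=> t; rewrite -E.
Qed.

Lemma Ifilt_nn_intro n f (F : tup (mcar Q) n -> A) : cochain hA n f ->
  hA (pow (mst Q) n) F -> (forall t, f (tup2seq t) = F (tmap pi t)) ->
  Ifilt pi hA n n f.
Proof.
move=> Hc HF E; split => //; first by rewrite ltnn.
move=> _; rewrite subnn.
exists (fun z => F z.2); split.
  exact: (hF (adm_snd _ _) HF).
by case=> t2 /=; rewrite E.
Qed.

Lemma Ifilt_fact n f : Ifilt pi hA n n f ->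
  forall x1 x2, size x1 = n -> map pi x1 = map pi x2 -> f x1 = f x2.
Proof.
move=> /Ifilt_nn [F [_ E]] x1 x2 H1 Hm.
have H2 : size x2 = n by rewrite -(size_map pi) -Hm size_map.
have [t1 E1] := tup2seq_surj H1; have [t2 E2] := tup2seq_surj H2.
rewrite -E1 -E2 in Hm *.
rewrite !E; congr F; apply: tup2seq_inj; by rewrite !tup2seq_tmap.
Qed.
End IfiltL.

Set Implicit Arguments. Unset Strict Implicit. Unset Printing Implicit Defensive.
Local Open Scope ring_scope.

Section Main.
Variables (C : topcat)
  (G' : grpobj C) (Ms : seq (amonobj C))
  (N' : grpobj C) (iota' : mcar N' -> mcar G') (es : seq bool)
  (Q : monobj C) (pi : mcar (Gobj G' Ms) -> mcar Q) (s : mcar Q -> mcar (Gobj G' Ms))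
  (A : zmodType) (act : mcar (Gobj G' Ms) -> A -> A)
  (hA : forall X : Type, st C X -> (X -> A) -> Prop).
Hypotheses (HN' : normal_subgroup iota')
  (Hcok : is_mcokernel (@Nincl C N' G' iota' Ms es) pi)
  (Hs_adm : adm (mst Q) (mst (Gobj G' Ms)) s)
  (Hs : forall q, pi (s q) = q)
  (HA : is_module act)
  (HhA : is_rigidification act hA).
Variable p : nat.

Local Notation GG := (Gobj G' Ms).
Local Notation Ninc := (@Nincl C N' G' iota' Ms es).

Definition phi (f : seq (mcar GG) -> A) (y : seq (mcar Q)) : A :=
  if size y == p then f (map s y) else 0.
Definition KK f := ss1_num pi act hA p 0 f.

Lemma pi_adm : adm (mst GG) (mst Q) pi. Proof. by case: Hcok => [[]]. Qed.
Lemma pi_mul x y : pi (mmul x y) = mmul (pi x) (pi y). Proof. by case: Hcok => [[]]. Qed.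
Lemma pi_one : pi (mone GG) = mone Q. Proof. by case: Hcok => [[]]. Qed.
Lemma pi_N n : pi (Ninc n) = mone Q. Proof. by case: Hcok. Qed.

Lemma h0 : forall X (sX : st C X), hA sX (fun _ => 0). Proof. by case: HhA. Qed.
Lemma hB : forall X (sX : st C X) f g, hA sX f -> hA sX g -> hA sX (fun x => f x - g x).
Proof. by case: HhA. Qed.
Lemma hF : forall X Y (sX : st C X) (sY : st C Y) (u : X -> Y), adm sX sY u ->
        forall f, hA sY f -> hA sX (fun x => f (u x)).
Proof. by case: HhA. Qed.

Lemma pis y : map pi (map s y) = y.
Proof. by elim: y => //= a y ->; rewrite Hs. Qed.

Lemma K_fact f : KK f -> forall x1 x2, size x1 = p -> map pi x1 = map pi x2 -> f x1 = f x2.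
Proof. rewrite /KK /ss1_num addn0 => [[H1 _]] x1 x2; exact: (Ifilt_fact hF H1 (x1 := x1) (x2 := x2)). Qed.
Lemma K_coch f : KK f -> cochain hA p f.
Proof. by rewrite /KK /ss1_num addn0 => [[[]]]. Qed.

Lemma K_inv f : KK f -> forall y, size y = p -> forall n, act (Ninc n) (f y) = f y.
Proof.
move=> Kf y Hy n.
have [fsupp _ fnorm0] := K_coch Kf.
have Kd : Ifilt pi hA p.+1 p.+1 (dcoch act f) by move: Kf; rewrite /KK /ss1_num addn0 => [[]].
have [[_ _ dnorm] _ _] := Kd.
have H0 : dcoch act f (Ninc n :: y) = 0.
  rewrite (Ifilt_fact hF Kd (x1 := Ninc n :: y) (x2 := mone GG :: y)).
  - by apply: (dnorm [::] y); rewrite /= Hy.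
  - by rewrite /= Hy.
  - by rewrite /= pi_N pi_one.
have fN : forall z, f (Ninc n :: z) = 0.
  move=> z; case: (eqVneq (size (Ninc n :: z)) p) => Hz; last exact: fsupp.
  rewrite (K_fact Kf (x1 := Ninc n :: z) (x2 := mone GG :: z)) //=; last by rewrite pi_N pi_one.
  exact: (fnorm fsupp fnorm0 [::] z).
move: H0.
have -> : dcoch act f (Ninc n :: y) = act (Ninc n) (f y) + (\sum_(1 <= i < size (Ninc n :: y))
   sgn i (f (mergeat (@mmul C GG) i.-1 (Ninc n :: y)))) + sgn (size (Ninc n :: y)) (f (belast (Ninc n) y)) by [].
case: y Hy => [|y1 y'] Hy /=.
- rewrite big_geq // addr0 /sgn /= => /eqP; rewrite subr_eq0 => /eqP //.
- rewrite fN sgn0 addr0 big_ltn // big_nat_cond big1; last first.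
    move=> i /andP [/andP [Hi1 Hi2] _].
    have -> : i.-1 = (i.-2).+1 by case: i Hi1 {Hi2} => [|[|i]].
    by rewrite mergeatS fN sgn0.
  rewrite addr0 /sgn /=.
  rewrite (K_fact Kf (x1 := mmul (Ninc n) y1 :: y') (x2 := y1 :: y')) //.
    by move=> /eqP; rewrite subr_eq0 => /eqP.
  by rewrite !map_cons pi_mul pi_N mmul1l.
Qed.

Lemma dcoch_zero (g : seq (mcar GG) -> A) : (forall x, g x = 0) -> forall x, dcoch act g x = 0.
Proof.
move=> Hg [|x t] //=.
rewrite Hg (act0 HA) add0r Hg sgn0 addr0 big1 // => i _.
by rewrite Hg sgn0.
Qed.

Lemma match_zero (q n : nat) :
  match n with 0 => forall x, (fun _ : seq (mcar GG) => 0 : A) x = 0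
  | m.+1 => Ifilt pi hA q m (fun _ => 0) end.
Proof. case: n => [|m] //; exact: (Ifilt_zero pi h0). Qed.

Lemma D_zero f : ss1_den pi act hA p 0 f -> forall x, f x = 0.
Proof.
case=> g [h [Hg [_ Hh _] Hf]] x.
have Hg0 : forall x, g x = 0.
  move: Hg; rewrite addn0; case: (p) => [|m] //.
  by case=> _ /(_ (ltnSn m)).
rewrite Hf dcoch_zero // add0r; apply: Hh; by rewrite addn0.
Qed.

Lemma den_of_zero f : (forall x, f x = 0) -> ss1_den pi act hA p 0 f.
Proof.
move=> Hf; exists (fun _ => 0), (fun _ => 0); split.
- exact: match_zero.
- exact: (Ifilt_zero pi h0).
- by move=> x; rewrite Hf dcoch_zero // addr0.
Qed.

Lemma K_of_zero f : (forall x, f x = 0) -> KK f.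
Proof.
move=> /functional_extensionality ->; rewrite /KK /ss1_num.
have -> : dcoch act (fun _ : seq (mcar GG) => 0 : A) = fun _ => 0.
  by apply: functional_extensionality; exact: dcoch_zero.
by split; exact: (Ifilt_zero pi h0).
Qed.

Lemma phi_fact f : KK f -> forall x, size x = p -> f x = phi f (map pi x).
Proof.
move=> Kf x Hx; rewrite /phi size_map Hx eqxx.
by apply: K_fact => //; rewrite pis.
Qed.

Lemma phi_Q f : KK f -> cochainQ hA (Ninvariant Ninc act) p (phi f).
Proof.
move=> Kf; have [fsupp fhA fnorm0] := K_coch Kf.
have [F [HF EF]] : exists F : (tup (mcar Q) p -> A), hA (pow (mst Q) p) F /\
    forall t, f (tup2seq t) = F (tmap pi t).
  by move: Kf; rewrite /KK /ss1_num addn0 => [[/(Ifilt_nn hF) H _]].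
split.
- by move=> y Hy; rewrite /phi (negbTE Hy).
- apply: hA_ext HF => t.
  rewrite /phi size_tup2seq eqxx -tup2seq_tmap EF; congr F.
  by apply: tup2seq_inj; rewrite !tup2seq_tmap pis.
- move=> t n; rewrite /phi size_tup2seq eqxx.
  by apply: K_inv => //; rewrite size_map size_tup2seq.
- move=> s1 s2 Hsz; rewrite /phi size_cat /= addnS Hsz eqxx map_cat /=.
  rewrite (K_fact Kf (x2 := map s s1 ++ mone GG :: map s s2)).
  + exact: (fnorm fsupp fnorm0).
  + by rewrite size_cat /= !size_map addnS.
  + by rewrite !map_cat /= Hs pi_one.
Qed.

Lemma surj g : cochainQ hA (Ninvariant Ninc act) p g -> exists2 f, KK f & forall y, phi f y = g y.
Proof.
case=> gsupp ghA ginv gnorm.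
pose f := fun x : seq (mcar GG) => if size x == p then g (map pi x) else 0.
have fdep : forall x1 x2, map pi x1 = map pi x2 -> f x1 = f x2.
  by move=> x1 x2 E; rewrite /f -(size_map pi x1) -(size_map pi x2) E.
have fsupp : forall x, size x != p -> f x = 0 by move=> x H; rewrite /f (negbTE H).
have fnorm0 : forall s1 s2, (size s1 + size s2).+1 = p -> f (s1 ++ mone GG :: s2) = 0.
  move=> s1 s2 H; rewrite /f size_cat /= addnS H eqxx map_cat /= pi_one.
  by apply: gnorm; rewrite !size_map.
have fhA : hA (pow (mst GG) p) (fun t => f (tup2seq t)).
  apply: hA_ext (hF (adm_tmap p pi_adm) ghA) => t.
  by rewrite /f size_tup2seq eqxx tup2seq_tmap.
have finv : forall x n, act (Ninc n) (f x) = f x.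
  move=> x n; rewrite /f; case: eqP => Hx; last by rewrite (act0 HA).
  have [t Et] := tup2seq_surj (n := p) (x := map pi x) (etrans (size_map _ _) Hx).
  rewrite -Et; exact: ginv t n.
have Hm : forall k l, map pi (mergeat (@mmul C GG) k l) = mergeat (@mmul C Q) k (map pi l).
  by move=> k l; apply: map_mergeat; exact: pi_mul.
have DF : forall x1 x2, map pi x1 = map pi x2 -> dcoch act f x1 = dcoch act f x2.
  move=> [|a t] [|b u] // E; case: E => Hab Htu.
  have Hsz : size t = size u by rewrite -(size_map pi t) Htu size_map.
  have -> : dcoch act f (a :: t) = act a (f t) + (\sum_(1 <= i < size (a :: t))
   sgn i (f (mergeat (@mmul C GG) i.-1 (a :: t)))) + sgn (size (a :: t)) (f (belast a t)) by [].
  have -> : dcoch act f (b :: u) = act b (f u) + (\sum_(1 <= i < size (b :: u))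
   sgn i (f (mergeat (@mmul C GG) i.-1 (b :: u)))) + sgn (size (b :: u)) (f (belast b u)) by [].
  congr (_ + _ + _).
  - rewrite (fdep _ _ Htu).
    exact: (@act_inv _ _ _ _ _ _ _ _ _ _ HN' Hcok HA _ _ _ Hab (finv u)).
  - rewrite /= Hsz; apply: eq_bigr => i _; congr sgn; apply: fdep.
    by rewrite !Hm /= Hab Htu.
  - rewrite /= Hsz; congr sgn; apply: fdep.
    by rewrite -!belast_map Hab Htu.
have fK : KK f.
  rewrite /KK /ss1_num addn0; split.
  - apply: (Ifilt_nn_intro hF (F := fun t => g (tup2seq t))).
    + by split.
    + exact: ghA.
    + by move=> t; rewrite /f size_tup2seq eqxx tup2seq_tmap.
  - apply: (Ifilt_nn_intro hF (F := fun t => dcoch act f (tup2seq (tmap s t)))).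
    + split.
      * exact: (dcoch_supp HA fsupp).
      * exact: (dcoch_hA HhA fhA).
      * move=> s1 s2 _; exact: (dcoch_normal HA fsupp fnorm0).
    + exact: (hF (adm_tmap _ Hs_adm) (dcoch_hA HhA fhA)).
    + move=> t; apply: DF; by rewrite !tup2seq_tmap pis.
exists f => // y; rewrite /phi; case: eqP => Hy.
  by rewrite /f size_map Hy eqxx pis.
by rewrite gsupp //; apply/eqP.
Qed.

Lemma main_stmt :
  let K := ss1_num pi act hA p 0 in
  let D := ss1_den pi act hA p 0 in
  let AN := @Ninvariant C (Nobj N' Ms es) (Gobj G' Ms) (@Nincl C N' G' iota' Ms es) A act in
  exists phi : (seq (mcar (Gobj G' Ms)) -> A) -> (seq (mcar Q) -> A),
    (forall f, D f -> K f) /\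
    [/\
        forall f, K f ->
          [/\ (forall x, size x != p -> phi f x = 0),
              (forall x, size x = p -> f x = phi f (map pi x)) &
              forall f' : seq (mcar Q) -> A,
                (forall y, size y != p -> f' y = 0) ->
                (forall x, size x = p -> f x = f' (map pi x)) ->
                forall y, f' y = phi f y],
        forall f, K f -> cochainQ hA AN p (phi f),
        forall f g, K f -> K g -> forall y, phi (fun x => f x - g x) y = phi f y - phi g y,
        forall f, K f -> ((forall y, phi f y = 0) <-> D f) &
        forall g, cochainQ hA AN p g -> exists2 f, K f & forall y, phi f y = g y].
Proof.
move=> K D AN; exists phi; split.
  by move=> f /D_zero Hf; apply: K_of_zero.
split.
- move=> f Kf; split.
  + by move=> x Hx; rewrite /phi (negbTE Hx).
  + exact: phi_fact.
  + move=> f' Hf'1 Hf'2 y; rewrite /phi; case: eqP => Hy; last by apply: Hf'1; apply/eqP.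
    by rewrite Hf'2 ?pis // size_map.
- exact: phi_Q.
- by move=> f g _ _ y; rewrite /phi; case: eqP; rewrite ?subr0.
- move=> f Kf; split.
  + move=> H0; apply: den_of_zero => x.
    have [fsupp _ _] := K_coch Kf.
    case: (eqVneq (size x) p) => Hx; last exact: fsupp.
    by rewrite (phi_fact Kf Hx) H0.
  + by move=> /D_zero Hf y; rewrite /phi Hf; case: eqP.
- exact: surj.
Qed.
End Main.

Set Implicit Arguments. Unset Strict Implicit.
Local Open Scope ring_scope.
Theorem proposition10p11
  (C : topcat)
  (G' : grpobj C) (Ms : seq (amonobj C))
  (N' : grpobj C) (iota' : mcar N' -> mcar G') (es : seq bool)
  (Q : monobj C) (pi : mcar (Gobj G' Ms) -> mcar Q) (s : mcar Q -> mcar (Gobj G' Ms))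
  (A : zmodType) (act : mcar (Gobj G' Ms) -> A -> A)
  (hA : forall X : Type, st C X -> (X -> A) -> Prop)
  (* N' is a normal subgroup of G'; N = N' x prod_i M_i^{e'_i} *)
  (HN' : normal_subgroup iota')
  (Hes : size es = size Ms)
  (* pi : G -> G/N is the cokernel of N -> G, with kernel N *)
  (Hcok : is_mcokernel (@Nincl C N' G' iota' Ms es) pi)
  (Hker : is_kernel (@Nincl C N' G' iota' Ms es) pi)
  (* the section s *)
  (Hs_adm : adm (mst Q) (mst (Gobj G' Ms)) s)
  (Hs : forall q, pi (s q) = q)
  (Hs1 : exists q0, s q0 = mone (Gobj G' Ms))
  (* (A, h_A) is a G-module with C-rigidification *)
  (HA : is_module act)
  (HhA : is_rigidification act hA)
  (p : nat) :
  let K := ss1_num pi act hA p 0 in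
  let D := ss1_den pi act hA p 0 in
  let AN := @Ninvariant C (Nobj N' Ms es) (Gobj G' Ms) (@Nincl C N' G' iota' Ms es) A act in
  exists phi : (seq (mcar (Gobj G' Ms)) -> A) -> (seq (mcar Q) -> A),
    (* the denominator lies in the numerator *)
    (forall f, D f -> K f) /\
    [/\
        (* phi f is the unique f' (a function on (G/N)^p) with f = f' o pi^p *)
        forall f, K f ->
          [/\ (forall x, size x != p -> phi f x = 0),
              (forall x, size x = p -> f x = phi f (map pi x)) &
              forall f' : seq (mcar Q) -> A,
                (forall y, size y != p -> f' y = 0) ->
                (forall x, size x = p -> f x = f' (map pi x)) ->
                forall y, f' y = phi f y],
        (* phi lands in C^p(G/N, A^N) *)
        forall f, K f -> cochainQ hA AN p (phi f),
        (* phi is additive on the numerator *)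
        forall f g, K f -> K g -> forall y, phi (fun x => f x - g x) y = phi f y - phi g y,
        (* its kernel is exactly the denominator: injective on ss_1^{p,0} *)
        forall f, K f -> ((forall y, phi f y = 0) <-> D f) &
        (* surjective onto C^p(G/N, A^N) *)
        forall g, cochainQ hA AN p g -> exists2 f, K f & forall y, phi f y = g y].
Proof.
exact: (main_stmt HN' Hcok Hs_adm Hs HA HhA).
Qed.
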